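(* Fix $\omega>0$ and $\alpha_0,\alpha_1\in\mathbb C$, and let $\alpha(t)=(1-t)\alpha_0+t\alpha_1$ for $t\in[0,1]$. Assume $\omega^2>|\alpha(t)|^2$ for all $t\in[0,1]$. Let $$\xi_-(t)=\frac{\omega-\sqrt{\omega^2-|\alpha(t)|^2}}{\alpha(t)}$$ (understood as $\frac{\overline{\alpha(t)}}{\omega+\sqrt{\omega^2-|\alpha(t)|^2}}$, which is also defined when $\alpha(t)=0$). Then the curve $t\mapsto\xi_-(t)$, $t\in[0,1]$, traces a segment of a hyperbolic line in the Poincaré disk $D=\{|z|<1\}$.
   Context: A hyperbolic line in the Poincaré disk model $D$ is the intersection of $D$ with a Euclidean circle orthogonal to the unit circle, or with a straight line through the origin (a diameter). The point $\xi_-(t)$ lies in $D$ and is the parameter of the ground state of $H(t)=\omega a^*a+\frac{\alpha(t)}{2}a^2+\frac{\overline{\alpha(t)}}{2}{a^*}^2$, i.e. the ground state is annihilated by $a+\xi_-(t)a^*$. *)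

(* Defs.v *)
From Stdlib Require Import Reals.
From Coquelicot Require Import Coquelicot.
Open Scope R_scope.

Definition in_disk (z : C) : Prop := Cmod z < 1.

(* A hyperbolic line in D: the intersection of D with a Euclidean circle
   orthogonal to the unit circle (center c, radius r > 0, |c|^2 = 1 + r^2),
   or with a straight line through the origin (spanned by u <> 0). *)
Definition hyperbolic_line (L : C -> Prop) : Prop :=
  (exists (c : C) (r : R), 0 < r /\ Cmod c ^ 2 = 1 + r ^ 2 /\
      forall z, L z <-> (in_disk z /\ Cmod (Cminus z c) = r))
  \/
  (exists u : C, u <> 0%C /\
      forall z, L z <-> (in_disk z /\ Im (Cmult z (Cconj u)) = 0)).

Definition alpha (a0 a1 : C) (t : R) : C :=
  Cplus (Cmult (RtoC (1 - t)) a0) (Cmult (RtoC t) a1).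

Definition xi_minus (omega : R) (a0 a1 : C) (t : R) : C :=
  Cdiv (Cconj (alpha a0 a1 t))
       (RtoC (omega + sqrt (omega ^ 2 - Cmod (alpha a0 a1 t) ^ 2))).

(* Main.v *)
Require Import Defs.
From Stdlib Require Import Reals Lra Psatz.
From Coquelicot Require Import Coquelicot.
Open Scope R_scope.

Lemma cont_pair (f g : R -> R) (t : R) :
  continuous f t -> continuous g t ->
  @continuous R_UniformSpace C_UniformSpace (fun u => (f u, g u)) t.
Proof.
  intros Hf Hg P [eps HP].
  assert (A : locally t (fun u => ball (f t) eps (f u))).
  { apply Hf. exists eps; auto. }
  assert (B : locally t (fun u => ball (g t) eps (g u))).
  { apply Hg. exists eps; auto. }
  unfold filtermap. generalize (filter_and _ _ A B). apply filter_imp.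
  intros u [H1 H2]. apply HP. split; assumption.
Qed.

Definition P (x0 x1 t : R) := (1-t)*x0 + t*x1.
Definition Q (y0 y1 t : R) := (1-t)*y0 + t*y1.
Definition Dn (omega x0 y0 x1 y1 t : R) := omega + sqrt (omega^2 - (P x0 x1 t ^2 + Q y0 y1 t ^2)).

Lemma cmod_alpha (x0 y0 x1 y1 t : R) : Cmod (alpha (x0,y0) (x1,y1) t) ^ 2 = P x0 x1 t ^2 + Q y0 y1 t ^2.
Proof.
  unfold Cmod. rewrite pow2_sqrt by (apply Rplus_le_le_0_compat; apply pow2_ge_0).
  unfold alpha, P, Q; simpl; ring.
Qed.

Lemma xi_eq (omega x0 y0 x1 y1 t : R) : 0 < omega ->
  xi_minus omega (x0,y0) (x1,y1) t = (P x0 x1 t / Dn omega x0 y0 x1 y1 t, - Q y0 y1 t / Dn omega x0 y0 x1 y1 t).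
Proof.
  intros Ho. unfold xi_minus. rewrite cmod_alpha.
  assert (0 < Dn omega x0 y0 x1 y1 t). { unfold Dn. generalize (sqrt_pos (omega ^ 2 - (P x0 x1 t ^ 2 + Q y0 y1 t ^ 2))). lra. }
  fold (Dn omega x0 y0 x1 y1 t). unfold Cdiv, Cmult, Cinv, Cconj, alpha, P, Q. simpl.
  apply injective_projections; simpl; field; lra.
Qed.


Lemma key (omega p q X Y m1 m2 : R) : 0 < omega -> p ^2 + q ^2 < omega ^2 ->
  X = p / (omega + sqrt (omega^2 - (p^2+q^2))) ->
  Y = - q / (omega + sqrt (omega^2 - (p^2+q^2))) ->
  X^2 + Y^2 < 1 /\ 2 * omega * (m1 * X - m2 * Y) = (m1 * p + m2 * q) * (1 + X^2 + Y^2).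
Proof.
  intros Ho h HX HY.
  set (S := sqrt (omega ^ 2 - (p ^ 2 + q ^ 2))) in *.
  assert (HS : 0 < S) by (apply sqrt_lt_R0; lra).
  assert (HS2 : S * S = omega ^ 2 - (p ^ 2 + q ^ 2)) by (apply sqrt_sqrt; lra).
  assert (E : X^2 + Y^2 = (omega - S) / (omega + S)).
  { assert (Hpq : p^2+q^2 = (omega-S)*(omega+S)) by nra.
    subst X Y. transitivity ((p^2+q^2)/(omega+S)^2); [field; lra|].
    rewrite Hpq. field. lra. }
  split.
  - rewrite E. apply Rmult_lt_reg_r with (omega + S); [lra|].
    field_simplify; lra.
  - replace (1+X^2+Y^2) with (1 + (X^2+Y^2)) by ring.
    rewrite E. subst X Y. field. lra.
Qed.

Lemma circ (X Y m1 m2 e omega : R) : e <> 0 ->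
  2 * omega * (m1 * X - m2 * Y) = e * (1 + X^2 + Y^2) ->
  (X - m1*omega/e)^2 + (Y + m2*omega/e)^2 = (m1*omega/e)^2 + (m2*omega/e)^2 - 1.
Proof.
  intros He H. set (a := omega / e).
  assert (Ha : e * a = omega) by (unfold a; field; auto).
  assert (H2 : 2 * a * (m1 * X - m2 * Y) = 1 + X^2 + Y^2).
  { apply Rmult_eq_reg_l with e; auto. rewrite <- H, <- Ha. ring. }
  replace (m1*omega/e) with (m1*a) by (unfold a; field; auto).
  replace (m2*omega/e) with (m2*a) by (unfold a; field; auto).
  nra.
Qed.

Lemma line_exists (x0 y0 x1 y1 : R) : exists m1 m2, (m1 <> 0 \/ m2 <> 0) /\
  forall t, m1 * P x0 x1 t + m2 * Q y0 y1 t = m1 * x0 + m2 * y0.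
Proof.
  destruct (Req_dec (x1 - x0) 0) as [H1|H1]; destruct (Req_dec (y1 - y0) 0) as [H2|H2].
  - exists 1, 0. split; [lra|]. intro t; unfold P, Q.
    replace x1 with x0 by lra. ring.
  - exists (-(y1-y0)), (x1-x0). split; [lra|]. intro t; unfold P, Q. ring.
  - exists (-(y1-y0)), (x1-x0). split; [lra|]. intro t; unfold P, Q. ring.
  - exists (-(y1-y0)), (x1-x0). split; [lra|]. intro t; unfold P, Q. ring.
Qed.

Lemma cont_comp (omega x0 y0 x1 y1 t : R) : 0 < omega -> P x0 x1 t ^2 + Q y0 y1 t ^2 < omega ^2 ->
  continuous (fun u => P x0 x1 u / Dn omega x0 y0 x1 y1 u) t /\
  continuous (fun u => - Q y0 y1 u / Dn omega x0 y0 x1 y1 u) t.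
Proof.
  intros Ho h. unfold Dn; unfold P, Q in *.
  split; apply (ex_derive_continuous (K:=R_AbsRing) (V:=R_NormedModule)); auto_derive.
  all: repeat split; [ simpl in h; lra | match goal with |- _ + sqrt ?a <> 0 => generalize (sqrt_pos a); lra end ].
Qed.

From Stdlib Require Import FunctionalExtensionality.

Theorem theorem3 (omega : R) (a0 a1 : C) :
  0 < omega ->
  (forall t : R, 0 <= t <= 1 -> Cmod (alpha a0 a1 t) ^ 2 < omega ^ 2) ->
  (forall t : R, 0 <= t <= 1 -> continuous (xi_minus omega a0 a1) t) /\
  exists L : C -> Prop, hyperbolic_line L /\
    forall t : R, 0 <= t <= 1 -> L (xi_minus omega a0 a1 t).
Proof.
  intros Ho Hb. destruct a0 as [x0 y0], a1 as [x1 y1].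
  assert (H : forall t, 0 <= t <= 1 -> P x0 x1 t ^2 + Q y0 y1 t ^2 < omega ^2).
  { intros t Ht. rewrite <- cmod_alpha. auto. }
  assert (E : xi_minus omega (x0,y0) (x1,y1) =
     fun u => (P x0 x1 u / Dn omega x0 y0 x1 y1 u, - Q y0 y1 u / Dn omega x0 y0 x1 y1 u)).
  { extensionality u. apply xi_eq; auto. }
  rewrite E. clear E. split.
  { intros t Ht. destruct (cont_comp omega x0 y0 x1 y1 t Ho (H t Ht)).
    apply cont_pair; auto. }
  destruct (line_exists x0 y0 x1 y1) as [m1 [m2 [Hm Hl]]].
  set (e := m1 * x0 + m2 * y0) in *.
  assert (K : forall t, 0 <= t <= 1 ->
     let X := P x0 x1 t / Dn omega x0 y0 x1 y1 t in
     let Y := - Q y0 y1 t / Dn omega x0 y0 x1 y1 t in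
     X^2 + Y^2 < 1 /\ 2 * omega * (m1 * X - m2 * Y) = e * (1 + X^2 + Y^2)).
  { intros t Ht X Y. rewrite <- (Hl t). apply key; auto. }
  assert (Hdisk : forall X Y, X^2 + Y^2 < 1 -> in_disk (X, Y)).
  { intros X Y HXY. unfold in_disk, Cmod.
    apply Rlt_le_trans with (sqrt 1); [|rewrite sqrt_1; lra].
    apply sqrt_lt_1_alt. simpl fst; simpl snd. split; nra. }
  destruct (Req_dec e 0) as [He|He].
  - exists (fun z => in_disk z /\ Im (Cmult z (Cconj (m2, m1))) = 0). split.
    + right. exists (m2, m1). split.
      * intro Hu. injection Hu. lra.
      * intro z; reflexivity.
    + intros t Ht. destruct (K t Ht) as [K1 K2]. split; [apply Hdisk; auto|].
      simpl. rewrite He in K2. nra.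
  - set (c := (m1 * omega / e, - (m2 * omega / e))).
    assert (CS : e^2 < (m1^2+m2^2) * omega^2).
    { assert (h0 := H 0 ltac:(lra)). unfold P, Q in h0.
      replace ((1-0)*x0 + 0*x1) with x0 in h0 by ring.
      replace ((1-0)*y0 + 0*y1) with y0 in h0 by ring.
      assert (e^2 <= (m1^2+m2^2)*(x0^2+y0^2)).
      { unfold e. replace ((m1^2+m2^2)*(x0^2+y0^2)) with ((m1 * x0 + m2 * y0) ^ 2 + (m1*y0-m2*x0)^2) by ring.
        generalize (pow2_ge_0 (m1*y0-m2*x0)); lra. }
      assert (0 < m1^2+m2^2) by (destruct Hm; nra).
      nra. }
    assert (Hr : 0 < (m1*omega/e)^2 + (m2*omega/e)^2 - 1).
    { replace ((m1*omega/e)^2 + (m2*omega/e)^2 - 1) with (((m1^2+m2^2)*omega^2 - e^2)/e^2)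
        by (field; auto).
      apply Rdiv_lt_0_compat; [lra|]. apply pow2_gt_0; auto. }
    exists (fun z => in_disk z /\ Cmod (Cminus z c) = sqrt ((m1*omega/e)^2 + (m2*omega/e)^2 - 1)).
    split.
    + left. exists c, (sqrt ((m1*omega/e)^2 + (m2*omega/e)^2 - 1)). split; [|split].
      * apply sqrt_lt_R0; auto.
      * unfold Cmod, c; simpl fst; simpl snd.
        rewrite !pow2_sqrt; [ring|lra|].
        apply Rplus_le_le_0_compat; apply pow2_ge_0.
      * intro z; reflexivity.
    + intros t Ht. destruct (K t Ht) as [K1 K2]. split; [apply Hdisk; auto|].
      unfold Cmod, Cminus, Cplus, Copp, c; simpl fst; simpl snd. f_equal.
      rewrite <- circ with (e := e) (omega := omega) (X := P x0 x1 t / Dn omega x0 y0 x1 y1 t)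
        (Y := - Q y0 y1 t / Dn omega x0 y0 x1 y1 t); auto.
      ring.
Qed.
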